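(* Let $T$ be a reducing triangulation. Any walk in $T$ whose turn sequence has the form $2\,3^*\,2$ contains a $2_r$-turn. Any walk in $T$ whose turn sequence has the form $2\,3^*\,4$ or $4\,3^*\,2$ contains a $2_r$-turn or a $4_r$-turn.
   Context: A triangulation is an embedded graph whose faces are all open disks bounded by three edge-sides. A reducing triangulation $T$ of an oriented surface without boundary is a triangulation in which every vertex has degree at least $8$ and each triangle is colored red or blue so that adjacent triangles have different colors. It may be infinite, for instance when lifted to a covering space together with its colors. Suppose a walk traverses a directed edge $e$ into a vertex $v$ and then leaves $v$ along a directed edge $e'$. This occurrence of $v$ makes a $k$-turn ($k\ge 0$) if exactly $k$ triangles around $v$ lie to the left of the length-two walk $e\,e'$, between $e$ and $e'$ in the cyclic order around $v$. It makes a $-k$-turn ($k\ge 1$) if exactly $k$ triangles lie to its right. A turn is named by an integer in $\{-3,\dots,3\}$ when possible, which is unambiguous since degrees are at least $8$; otherwise it is named by the positive integer. A $k_b$-turn (resp. $k_r$-turn) is a $k$-turn in which the triangle to the left of $e$ is blue (resp. red). The turn sequence of a walk is the sequence of turns made at its interior vertices. Here $3^*$ denotes any number $\ge 0$ of consecutive $3$'s. *)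

(* Defs.v *)
From mathcomp Require Import all_boot all_order all_algebra.
Set Implicit Arguments. Unset Strict Implicit. Unset Printing Implicit Defensive.
Import GRing.Theory Num.Theory.

(* A (possibly infinite) triangulation of an oriented surface without boundary,
   encoded as an oriented combinatorial map on a type of darts D:
   - a dart d is an edge-side directed away from its origin vertex;
   - alpha d is the same edge directed the other way (fixed-point-free involution);
   - sigma d is the next dart counterclockwise around the origin of d;
     vertices are the sigma-orbits, the degree is the orbit size;
   - the face to the LEFT of the directed edge d is the triangle at the corner
     between d and sigma d.  Walking the boundary of that face (clockwise)
     is d |-> alpha (sigma d); faces are the orbits of this map.
   - red d : the face to the left of d is red (otherwise blue). *)

Definition face_next (D : Type) (alpha sigma : D -> D) (d : D) : D :=
  alpha (sigma d).

Definition is_reducing_triangulation (D : Type) (alpha sigma : D -> D)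
    (red : D -> bool) : Prop :=
  (forall d, alpha (alpha d) = d) /\
  (forall d, alpha d <> d) /\
      (forall d, exists n, 8 <= n /\ iter n sigma d = d /\
                 (forall j, 0 < j < n -> iter j sigma d <> d)) /\
      (forall d, face_next alpha sigma (face_next alpha sigma (face_next alpha sigma d)) = d
                 /\ face_next alpha sigma d <> d) /\
      (forall d, red (face_next alpha sigma d) = red d) /\
      (forall d, red (alpha d) = ~~ red d).

(* Walk e e' through the vertex v = end of e = origin of e'.
   The number of triangles to the left of e e' is the least k >= 0 with
   sigma^k e' = alpha e (rotating counterclockwise from e' to the reverse of e). *)
Definition left_count (D : Type) (alpha sigma : D -> D) (e e' : D) (k : nat) : Prop :=
  iter k sigma e' = alpha e /\ (forall j, j < k -> iter j sigma e' <> alpha e).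

(* Number of triangles to the right: least k >= 1 with sigma^k (alpha e) = e'. *)
Definition right_count (D : Type) (alpha sigma : D -> D) (e e' : D) (k : nat) : Prop :=
  0 < k /\ iter k sigma (alpha e) = e' /\
  (forall j, 0 < j < k -> iter j sigma (alpha e) <> e').

(* The name of the turn made by e e': an integer in {-3..3} when possible,
   otherwise the positive integer (number of triangles on the left). *)
Definition turn (D : Type) (alpha sigma : D -> D) (e e' : D) (t : int) : Prop :=
  (exists k : nat, t = Posz k /\ k <= 3 /\ left_count alpha sigma e e' k)
  \/ (exists k : nat, t = (- Posz k)%R /\ 0 < k <= 3 /\ right_count alpha sigma e e' k)
  \/ (exists k : nat, t = Posz k /\ 3 < k /\ left_count alpha sigma e e' k /\
        ~ (exists j : nat, 0 < j <= 3 /\ right_count alpha sigma e e' j)).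

(* A walk given by its consecutive directed edges w 0, w 1, ..., w (m+1):
   the end vertex of w i is the origin of w (i+1). *)
Definition is_walk (D : Type) (alpha sigma : D -> D) (w : nat -> D) (m : nat) : Prop :=
  forall i, i <= m -> exists k, iter k sigma (w i.+1) = alpha (w i).

(* The i-th interior vertex (between w i and w (i+1)) makes turn t. *)
Definition turn_at (D : Type) (alpha sigma : D -> D) (w : nat -> D) (i : nat) (t : int)
  : Prop := turn alpha sigma (w i) (w i.+1) t.

(* A k_r-turn: a k-turn whose triangle to the left of the incoming edge is red. *)
Definition red_turn_at (D : Type) (alpha sigma : D -> D) (red : D -> bool)
    (w : nat -> D) (i : nat) (t : int) : Prop :=
  turn_at alpha sigma w i t /\ red (w i).

(* Main.v *)
Require Import Defs.
From mathcomp Require Import all_boot all_order all_algebra.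

Lemma turn_posE (D : Type) (alpha sigma : D -> D) e e' (k : nat) :
  turn alpha sigma e e' (Posz k) -> left_count alpha sigma e e' k.
Proof.
case=> [[k0 [[<-] [_ H]]] //|[[k0 [E [H0 _]]]|[k0 [[<-] [_ [H _]]]]] //].
by case: k0 E H0 => [|k0] //.
Qed.

Section S.
Variables (D : Type) (alpha sigma : D -> D) (red : D -> bool).
Hypothesis HT : is_reducing_triangulation alpha sigma red.

Lemma red_sigma d : red (sigma d) = ~~ red d.
Proof.
case: HT => _ [_ [_ [_ [Hf Ha]]]].
by rewrite -(Hf d) /face_next Ha negbK.
Qed.

Lemma red_iter k d : red (iter k sigma d) = red d (+) odd k.
Proof.
elim: k => [|k IH] /=; first by rewrite addbF.
by rewrite red_sigma IH; case: (red d); case: (odd k).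
Qed.

Lemma red_turn {e e' k} : left_count alpha sigma e e' k ->
  ~~ red e = red e' (+) odd k.
Proof.
case=> E _; case: HT => _ [_ [_ [_ [_ Ha]]]].
by rewrite -Ha -E red_iter.
Qed.

Lemma walk_col (w : nat -> D) m :
  (forall i, 0 < i < m -> turn_at alpha sigma w i (Posz 3)) ->
  forall j, 0 < j <= m -> red (w j) = red (w 1).
Proof.
move=> H3; elim=> [|j IH] //; case: j IH => [|j] IH // /andP [_ Hj].
rewrite -IH; last by apply/andP; split => //; apply: ltnW.
have Hi : 0 < j.+1 < m by apply/andP.
have := red_turn (@turn_posE _ alpha sigma _ _ 3 (H3 j.+1 Hi)).
rewrite /= addbT => E.
by move: E; case: (red (w j.+1)); case: (red (w j.+2)).
Qed.
End S.

Theorem lemma3p3 (D : Type) (alpha sigma : D -> D) (red : D -> bool) :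
  is_reducing_triangulation alpha sigma red ->
  (forall (w : nat -> D) (m : nat),
     0 < m -> is_walk alpha sigma w m ->
     turn_at alpha sigma w 0 (Posz 2) ->
     (forall i, 0 < i < m -> turn_at alpha sigma w i (Posz 3)) ->
     turn_at alpha sigma w m (Posz 2) ->
     exists i, i <= m /\ red_turn_at alpha sigma red w i (Posz 2)) /\
  (forall (w : nat -> D) (m : nat),
     0 < m -> is_walk alpha sigma w m ->
     ((turn_at alpha sigma w 0 (Posz 2) /\ turn_at alpha sigma w m (Posz 4)) \/
      (turn_at alpha sigma w 0 (Posz 4) /\ turn_at alpha sigma w m (Posz 2))) ->
     (forall i, 0 < i < m -> turn_at alpha sigma w i (Posz 3)) ->
     exists i, i <= m /\
       (red_turn_at alpha sigma red w i (Posz 2) \/ red_turn_at alpha sigma red w i (Posz 4))).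
Proof.
move=> HT.
have key : forall (w : nat -> D) m k, 0 < m ->
    (forall i, 0 < i < m -> turn_at alpha sigma w i (Posz 3)) ->
    turn_at alpha sigma w 0 (Posz k) -> ~~ odd k ->
    red (w m) = ~~ red (w 0).
  move=> w m k Hm H3 H0 Hk.
  have := @red_turn _ alpha sigma red HT _ _ _ (@turn_posE _ alpha sigma _ _ k H0); rewrite (negbTE Hk) addbF => E.
  have Hmm : 0 < m <= m by rewrite Hm leqnn.
  by rewrite (@walk_col _ alpha sigma red HT w m H3 m Hmm) -E.
split.
  move=> w m Hm _ H0 H3 Hm2.
  have := key w m 2 Hm H3 H0 isT => E.
  case R: (red (w 0)).
    by exists 0; split => //; split.
  by exists m; split => //; split => //; rewrite E R.
move=> w m Hm _ [[H0 Hm2]|[H0 Hm2]] H3.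
  have := key w m 2 Hm H3 H0 isT => E.
  case R: (red (w 0)).
    by exists 0; split => //; left; split.
  by exists m; split => //; right; split => //; rewrite E R.
have := key w m 4 Hm H3 H0 isT => E.
case R: (red (w 0)).
  by exists 0; split => //; right; split.
by exists m; split => //; left; split => //; rewrite E R.
Qed.
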